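(* Let $f$ and $g_n$ ($n\in\mathbb{Z}^+$) be non-constant entire functions. If $\lim_{n\to\infty}(g_n\circ\cdots\circ g_1\circ f)=F$ uniformly on compact subsets of $\mathbb{C}$, then $$\bigcup_{n=0}^{\infty}{\rm Aut}(g_n\circ\cdots\circ g_1\circ f)\subseteq{\rm Aut}(F),$$ where the term with $n=0$ is ${\rm Aut}(f)$.
   Context: For a function $h$, ${\rm Aut}(h)$ is the set of automorphic functions of $h$: (generally multivalued) analytic functions $\phi$, or branches of such on domains, with $h(\phi(z))=h(z)$ on the domain of definition of $\phi$. If $F$ is constant, ${\rm Aut}(F)$ is by convention the set of all functions. *)

(* Defs.v *)
From Stdlib Require Import Reals List.
From Coquelicot Require Import Coquelicot.
Open Scope R_scope.

Definition C_differentiable (f : C -> C) (z : C) : Prop :=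
  @ex_derive C_AbsRing C_NormedModule f z.

Definition entire (f : C -> C) : Prop := forall z, C_differentiable f z.

Definition nonconstant (f : C -> C) : Prop := exists z w : C, f z <> f w.

Definition compact_set (K : C -> Prop) : Prop :=
  forall (I : Type) (U : I -> C -> Prop),
    (forall i, @open C_UniformSpace (U i)) ->
    (forall z, K z -> exists i, U i z) ->
    exists l : list I, forall z, K z -> exists i, In i l /\ U i z.

Definition cvg_locally_uniformly (G : nat -> C -> C) (F : C -> C) : Prop :=
  forall K, compact_set K ->
  forall eps : R, 0 < eps ->
  exists N : nat, forall n, (N <= n)%nat -> forall z, K z -> Cmod (G n z - F z) < eps.

Definition domain (D : C -> Prop) : Prop :=
  (exists z, D z) /\ @open C_UniformSpace D /\
  forall U V : C -> Prop, @open C_UniformSpace U -> @open C_UniformSpace V ->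
    (forall z, D z -> U z \/ V z) ->
    (forall z, D z -> U z -> V z -> False) ->
    (exists z, D z /\ U z) -> (exists z, D z /\ V z) -> False.

Definition analytic_on (D : C -> Prop) (phi : C -> C) : Prop :=
  forall z, D z -> C_differentiable phi z.

(* (D, phi) ∈ Aut(h): phi is an analytic function (branch) on the domain D with
   h (phi z) = h z on D; if h is constant, Aut(h) contains everything. *)
Definition in_Aut (h : C -> C) (D : C -> Prop) (phi : C -> C) : Prop :=
  ~ nonconstant h \/
  (domain D /\ analytic_on D phi /\ forall z, D z -> h (phi z) = h z).

(* iterated composition: comp_seq f g 0 = f,
   comp_seq f g (S n) = g (S n) ∘ comp_seq f g n = g_{n+1} ∘ ... ∘ g_1 ∘ f *)
Fixpoint comp_seq (f : C -> C) (g : nat -> C -> C) (n : nat) : C -> C :=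
  match n with
  | O => f
  | S m => fun z => g (S m) (comp_seq f g m z)
  end.

(* Main.v *)
Require Import Defs.
From Stdlib Require Import Reals List Classical Lia Lra.
From Coquelicot Require Import Coquelicot.

Lemma comp_seq_factor (f : C -> C) (g : nat -> C -> C) (n m : nat) :
  (n <= m)%nat -> forall a b, comp_seq f g n a = comp_seq f g n b ->
  comp_seq f g m a = comp_seq f g m b.
Proof.
  induction 1; intros a b Hh; auto.
  simpl. rewrite (IHle a b Hh). reflexivity.
Qed.

Lemma singleton_compact (a : C) : compact_set (fun z => z = a).
Proof.
  intros I U _ Hc. destruct (Hc a eq_refl) as [i Hi].
  exists (i :: nil). intros z ->. exists i. split; simpl; auto.
Qed.

Lemma lim_eq (f : C -> C) (g : nat -> C -> C) (F : C -> C) (n : nat) (a b : C) :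
  cvg_locally_uniformly (comp_seq f g) F ->
  comp_seq f g n a = comp_seq f g n b -> F a = F b.
Proof.
  intros Hc Hab.
  assert (Hsmall : forall eps, 0 < eps -> Cmod (F a - F b) < 2 * eps).
  { intros eps He.
    destruct (Hc _ (singleton_compact a) eps He) as [N1 H1].
    destruct (Hc _ (singleton_compact b) eps He) as [N2 H2].
    set (m := (n + N1 + N2)%nat).
    specialize (H1 m ltac:(unfold m; lia) a eq_refl).
    specialize (H2 m ltac:(unfold m; lia) b eq_refl).
    rewrite (comp_seq_factor f g n m ltac:(unfold m; lia) a b Hab) in H1.
    replace (F a - F b)%C with ((comp_seq f g m b - F b) + - (comp_seq f g m b - F a))%C by ring.
    eapply Rle_lt_trans; [apply Cmod_triangle|]. rewrite Cmod_opp. lra. }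
  assert (H0 : Cmod (F a - F b) = 0).
  { destruct (Rle_lt_or_eq_dec 0 _ (Cmod_ge_0 (F a - F b))) as [Hp|Hp]; auto.
    specialize (Hsmall (Cmod (F a - F b) / 4) ltac:(lra)). lra. }
  apply Cmod_eq_0 in H0.
  replace (F a) with ((F a - F b) + F b)%C by ring. rewrite H0. ring.
Qed.

Theorem proposition8 (f : C -> C) (g : nat -> C -> C) (F : C -> C) :
  entire f -> nonconstant f ->
  (forall n, (1 <= n)%nat -> entire (g n) /\ nonconstant (g n)) ->
  cvg_locally_uniformly (comp_seq f g) F ->
  forall (n : nat) (D : C -> Prop) (phi : C -> C),
    in_Aut (comp_seq f g n) D phi -> in_Aut F D phi.
Proof.
  intros _ _ _ Hc n D phi [Hnc | [Hd [Ha Hphi]]].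
  - left. intros [z [w Hzw]]. apply Hzw. apply (lim_eq f g F n); auto.
    apply NNPP. intro Hne. apply Hnc. exists z, w. exact Hne.
  - right. split; [exact Hd|]. split; [exact Ha|].
    intros z Hz. apply (lim_eq f g F n); auto.
Qed.
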